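(* The GT system $(\mathcal L,\{r_0,r_1,r_2\})$ is terminating. Moreover, every derivation sequence $G=G_0\Rightarrow G_1\Rightarrow\cdots\Rightarrow G_n$ of this system starting from a TLRG $G$ has length $n\le 2|V_G|$.
   Context: Graphs over a label alphabet $(\mathcal L_V,\mathcal L_E)$ are tuples $G=(V,E,s,t,l,m,p)$ with $V,E$ finite, $s,t:E\to V$ total, $l:V\rightharpoonup\mathcal L_V$ partial, $m:E\to\mathcal L_E$ total, $p:V\rightharpoonup\{0,1\}$ partial (rootedness; $p(v)=1$ means $v$ is a root). TLRG = $l,p$ total. Morphisms preserve sources, targets, edge labels, and node labels and rootedness wherever defined. A rule $\langle L\leftarrow K\rightarrow R\rangle$ has TLRGs $L,R$ and a common subgraph $K$ (sets included, $s,t,m$ restricted, partial maps $l_K\subseteq l_L$, $p_K\subseteq p_L$, likewise for $R$). It is applied to a TLRG $G$ via an injective morphism $g:L\to G$ satisfying the dangling condition (no edge outside $g(L)$ incident to a node of $g(V_L\setminus V_K)$) by deleting images of items of $L$ not in $K$ and undefining label/rootedness of $g_V(v)$ where undefined for $v\in V_K$, then adding disjointly the items of $R$ not in $K$ and setting label/rootedness of $g_V(v)$ to $l_R(v)/p_R(v)$ where undefined in $K$; $G\Rightarrow H$ when $H$ is isomorphic to the result. A system is terminating if there is no infinite sequence $G_0\Rightarrow G_1\Rightarrow\cdots$. Here $\mathcal L=(\{\square,\triangle\},\{\square\})$ and all edges are labelled $\square$. Rule $r_0$: $L$ has an unrooted node $1$ labelled $\square$, a rooted node $2$ labelled $\square$,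 and an edge $1\to 2$; $K$ consists of node $1$ with undefined label and rootedness; $R$ consists of node $1$, rooted, labelled $\square$. Rule $r_1$: identical to $r_0$ except that node $1$ of $L$ is labelled $\triangle$. Rule $r_2$: $L$ has a rooted node $1$ labelled $\square$, an unrooted node $2$ labelled $\square$, and an edge $1\to 2$; $K$ consists of nodes $1,2$ with undefined labels and rootedness and no edges; $R$ has node $1$ unrooted labelled $\triangle$, node $2$ rooted labelled $\square$, and an edge $1\to 2$. *)

(* Defs.v *)
From HB Require Import structures.
From mathcomp Require Import all_boot.
Set Implicit Arguments. Unset Strict Implicit. Unset Printing Implicit Defensive.

Inductive nlabel := Sq | Tri.
Inductive elabel := ESq.

Record graph := Graph {
  gV : finType;
  gE : finType;
  src : gE -> gV;
  tgt : gE -> gV;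
  lab : gV -> option nlabel;
  elab : gE -> elabel;
  root : gV -> option bool        (* partial rootedness p; Some true = root *)
}.

Definition TLRG (G : graph) : Prop :=
  forall v : gV G, lab v <> None /\ root v <> None.

Definition is_morphism (G H : graph) (fV : gV G -> gV H) (fE : gE G -> gE H) : Prop :=
  (forall e, src (fE e) = fV (src e)) /\
  (forall e, tgt (fE e) = fV (tgt e)) /\
  (forall e, elab (fE e) = elab e) /\
  (forall v l, lab v = Some l -> lab (fV v) = Some l) /\
  (forall v b, root v = Some b -> root (fV v) = Some b).

Definition inclusion (K L : graph) (kV : gV K -> gV L) (kE : gE K -> gE L) : Prop :=
  is_morphism kV kE /\ injective kV /\ injective kE.

(* A rule <L <- K -> R>, with K given as a common subgraph via inclusions *)
Record rule := Rule {
  rK : graph; rL : graph; rR : graph;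
  kLV : gV rK -> gV rL; kLE : gE rK -> gE rL;
  kRV : gV rK -> gV rR; kRE : gE rK -> gE rR
}.

Definition wf_rule (r : rule) : Prop :=
  TLRG (rL r) /\ TLRG (rR r) /\
  inclusion (kLV (r:=r)) (kLE (r:=r)) /\ inclusion (kRV (r:=r)) (kRE (r:=r)).

Section Apply.
Variables (r : rule) (G : graph).
Variables (fV : gV (rL r) -> gV G) (fE : gE (rL r) -> gE G).

Definition inKV (x : gV (rL r)) : bool := [exists k, kLV k == x].
Definition inKE (x : gE (rL r)) : bool := [exists k, kLE k == x].
Definition delV (v : gV G) : bool := [exists x, (fV x == v) && ~~ inKV x].
Definition delE (e : gE G) : bool := [exists x, (fE x == e) && ~~ inKE x].

Definition dangling_ok : Prop :=
  forall e : gE G, (forall x, fE x <> e) -> ~~ delV (src e) /\ ~~ delV (tgt e).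

(* items of the result: kept items of G, plus items of R not in K *)
Definition keepV (x : gV G + gV (rR r)) : bool :=
  match x with
  | inl v => ~~ delV v
  | inr w => ~~ [exists k, kRV k == w]
  end.
Definition keepE (x : gE G + gE (rR r)) : bool :=
  match x with
  | inl e => ~~ delE e
  | inr f => ~~ [exists k, kRE k == f]
  end.
Definition resV := {x : gV G + gV (rR r) | keepV x}.
Definition resE := {x : gE G + gE (rR r) | keepE x}.

(* a node of R is glued to the image in G of the corresponding K-node *)
Definition glueR (w : gV (rR r)) : gV G + gV (rR r) :=
  match [pick k | kRV k == w] with
  | Some k => inl (fV (kLV k))
  | None => inr w
  end.

Definition res_src (x : gE G + gE (rR r)) : gV G + gV (rR r) :=
  match x with inl e => inl (src e) | inr f => glueR (src f) end.
Definition res_tgt (x : gE G + gE (rR r)) : gV G + gV (rR r) :=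
  match x with inl e => inl (tgt e) | inr f => glueR (tgt f) end.
Definition res_elab (x : gE G + gE (rR r)) : elabel :=
  match x with inl e => elab e | inr f => elab f end.

(* node labels: for v = g(k), k in V_K with l_K(k) undefined, the label is
   first undefined and then set to l_R(k); otherwise it is unchanged. *)
Definition res_lab (x : gV G + gV (rR r)) : option nlabel :=
  match x with
  | inl v =>
      match [pick k | fV (kLV k) == v] with
      | Some k => if lab k is None then lab (kRV k) else lab v
      | None => lab v
      end
  | inr w => lab w
  end.
Definition res_root (x : gV G + gV (rR r)) : option bool :=
  match x with
  | inl v =>
      match [pick k | fV (kLV k) == v] with
      | Some k => if root k is None then root (kRV k) else root v
      | None => root v
      end
  | inr w => root w
  end.
End Apply.

Definition step (r : rule) (G H : graph) : Prop :=
  TLRG G /\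
  exists (fV : gV (rL r) -> gV G) (fE : gE (rL r) -> gE G),
    is_morphism fV fE /\ injective fV /\ injective fE /\ dangling_ok fV fE /\
    exists (phV : gV H -> resV fV) (phE : gE H -> resE fE),
      bijective phV /\ bijective phE /\
      (forall e, val (phV (src e)) = res_src fV (val (phE e))) /\
      (forall e, val (phV (tgt e)) = res_tgt fV (val (phE e))) /\
      (forall e, elab e = res_elab (val (phE e))) /\
      (forall v, lab v = res_lab fV (val (phV v))) /\
      (forall v, root v = res_root fV (val (phV v))).

Definition void_of (T : Type) (x : void) : T := match x with end.

Definition n1 : 'I_2 := ord0.
Definition n2 : 'I_2 := ord_max.

Definition K01 : graph :=
  @Graph unit void (@void_of unit) (@void_of unit)
         (fun _ => None) (@void_of elabel) (fun _ => None).
Definition R01 : graph :=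
  @Graph unit void (@void_of unit) (@void_of unit)
         (fun _ => Some Sq) (@void_of elabel) (fun _ => Some true).
Definition L01 (l1 : nlabel) : graph :=
  @Graph 'I_2 unit (fun _ => n1) (fun _ => n2)
         (fun v => if v == n1 then Some l1 else Some Sq) (fun _ => ESq)
         (fun v => Some (v != n1)).

Definition r0 : rule :=
  @Rule K01 (L01 Sq) R01 (fun _ => n1) (@void_of unit) id id.
Definition r1 : rule :=
  @Rule K01 (L01 Tri) R01 (fun _ => n1) (@void_of unit) id id.

Definition K2 : graph :=
  @Graph 'I_2 void (@void_of 'I_2) (@void_of 'I_2)
         (fun _ => None) (@void_of elabel) (fun _ => None).
Definition L2 : graph :=
  @Graph 'I_2 unit (fun _ => n1) (fun _ => n2)
         (fun _ => Some Sq) (fun _ => ESq) (fun v => Some (v == n1)).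
Definition R2 : graph :=
  @Graph 'I_2 unit (fun _ => n1) (fun _ => n2)
         (fun v => if v == n1 then Some Tri else Some Sq) (fun _ => ESq)
         (fun v => Some (v == n2)).
Definition r2 : rule :=
  @Rule K2 L2 R2 id (@void_of unit) id (@void_of unit).

Definition sys_step (G H : graph) : Prop :=
  step r0 G H \/ step r1 G H \/ step r2 G H.

(* Main.v *)
Require Import Defs.
From HB Require Import structures.
From mathcomp Require Import all_boot.
Set Implicit Arguments. Unset Strict Implicit.
Definition isSq (o : option nlabel) : bool := if o is Some Sq then true else false.
Definition nSq (G : graph) := #|[pred v : gV G | isSq (lab v)]|.
Definition mu (G : graph) := #|gV G| + nSq G.

Lemma card_bij_pred (A B : finType) (f : A -> B) (P : pred B) :
  bijective f -> #|[pred a | P (f a)]| = #|[pred b | P b]|.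
Proof.
case=> g fg gf; rewrite -(card_image (can_inj gf) [pred b | P b]).
apply: eq_card => a; apply/idP/imageP => [Pa|[x Px ->]].
  by exists (f a); rewrite // fg.
by rewrite inE gf.
Qed.

Lemma card_sub_pred (T : finType) (P Q : pred T) :
  #|[pred x : {x | P x} | Q (val x)]| = #|[pred y | P y && Q y]|.
Proof.
rewrite -(card_image val_inj); apply: eq_card => y.
apply/imageP/andP => [[x Qx ->]|[Py Qy]]; first by split; [exact: valP|].
by exists (exist _ y Py).
Qed.

Lemma card_suml (T1 T2 : finType) (R : pred (T1 + T2)) :
  (forall w, ~~ R (inr w)) -> #|[pred y | R y]| = #|[pred v | R (inl v)]|.
Proof.
move=> HR; rewrite -(card_image (@inl_inj T1 T2)); apply: eq_card => y.
apply/idP/imageP => [|[x Rx ->]] //.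
case: y => [v|w] Ry; last by move: (HR w) Ry; rewrite inE => /negbTE ->.
by exists v.
Qed.

Lemma res_counts r (G H : graph) (fV : gV (rL r) -> gV G) (phV : gV H -> resV fV) :
  bijective phV -> (forall v, lab v = res_lab fV (val (phV v))) ->
  #|gV H| = #|[pred y | keepV fV y]| /\
  nSq H = #|[pred y | keepV fV y && isSq (res_lab fV y)]|.
Proof.
move=> bV Hl; split.
  have -> : #|[pred y | keepV fV y]| = #|[pred y | keepV fV y && true]|.
    by apply: eq_card => y; rewrite !inE andbT.
  rewrite -(card_sub_pred _ (fun _ => true)) -(card_bij_pred (fun _ => true) bV).
  exact: eq_card.
rewrite -(card_sub_pred _ (fun y => isSq (res_lab fV y))) -(card_bij_pred _ bV) /nSq; apply: eq_card => v.
by rewrite !inE Hl.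
Qed.

Lemma I2_cases (x : 'I_2) : x = n1 \/ x = n2.
Proof.
case: x => [[|[|m]] Hm]; [left|right|] => //; try by apply: val_inj.
Qed.

Lemma n2n1 : (n2 == n1) = false. Proof. by []. Qed.

Lemma step01 l1 G H :
  step (@Rule K01 (L01 l1) R01 (fun _ => n1) (@void_of unit) id id) G H -> mu H < mu G.
Proof.
case=> _ [fV [fE [[_ [_ [_ [Hl _]]]] [injV [_ [_ [phV [phE [bV [_ [_ [_ [_ [Hlab _]]]]]]]]]]]]]].
rewrite /mu; have [-> ->] := res_counts bV Hlab.
rewrite card_suml; last by move=> []; rewrite /keepV negbK; apply/existsP; exists tt.
rewrite card_suml; last by move=> []; rewrite /keepV; apply/nandP; left; rewrite negbK; apply/existsP; exists tt.
have keepE v : keepV fV (inl v) = (v != fV n2).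
  rewrite /keepV /delV; congr negb; apply/existsP/eqP => [[x /andP [/eqP <-]]|->].
    case: (I2_cases x) => -> // /negP []; apply/existsP; by exists tt.
  exists n2; rewrite eqxx /=; apply/negP => /existsP [k /eqP].
  by move/(congr1 val).
have labE v : res_lab fV (inl v) = if v == fV n1 then Some Sq else lab v.
  rewrite /res_lab; case: pickP => [k /eqP <-|Hn] /=; first by rewrite eqxx.
  by have := Hn tt; rewrite /= eq_sym => ->.
have la : lab (fV n2) = Some Sq by exact: Hl.
have ab : (fV n2 == fV n1) = false by rewrite (inj_eq injV).
have g0 : 0 < #|gV G| by apply/card_gt0P; exists (fV n1).
have c1 : #|[pred v | keepV fV (inl v)]| < #|gV G|.
  rewrite (eq_card (B := predC1 (fV n2))) => [|v]; last by rewrite !inE keepE.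
  by rewrite cardC1; case: #|gV G| g0.
have c2 : #|[pred v | keepV fV (inl v) && isSq (res_lab fV (inl v))]| <= nSq G.
  rewrite (eq_card (B := [pred v | (v != fV n2) && isSq (if v == fV n1 then Some Sq else lab v)])); last first.
    by move=> v; rewrite !inE keepE labE.
  rewrite /nSq [X in X <= _](cardD1 (fV n1)) [X in _ <= X](cardD1 (fV n2)).
  rewrite !inE eqxx eq_sym ab la /=.
  rewrite add1n ltnS; apply: subset_leq_card; apply/subsetP => v.
  rewrite !inE; case: (v =P fV n1) => //= _.
by rewrite -addSn leq_add.
Qed.

Lemma step2 G H : step r2 G H -> mu H < mu G.
Proof.
case=> _ [fV [fE [[_ [_ [_ [Hl _]]]] [injV [_ [_ [phV [phE [bV [_ [_ [_ [_ [Hlab _]]]]]]]]]]]]]].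
rewrite /mu; have [-> ->] := res_counts bV Hlab.
rewrite card_suml; last by move=> w; rewrite /keepV negbK; apply/existsP; exists w.
rewrite card_suml; last by move=> w; rewrite /keepV; apply/nandP; left; rewrite negbK; apply/existsP; exists w.
have keepE v : keepV fV (inl v) = true.
  rewrite /keepV /delV; apply/negP => /existsP [x /andP [_ /negP []]].
  by apply/existsP; exists x.
have la x : lab (fV x) = Some Sq by exact: Hl.
have labE v : isSq (res_lab fV (inl v)) = (v != fV n1) && isSq (lab v).
  rewrite /res_lab; case: pickP => [k /eqP <-|Hn] /=.
    case: (I2_cases k) => ->; first by rewrite !eqxx.
    by rewrite (inj_eq injV) la.
  by have := Hn n1; rewrite /= eq_sym => ->.
rewrite (eq_card (B := [pred v : gV G | true])); last by move=> v; rewrite !inE keepE.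
rewrite ltn_add2l.
rewrite (eq_card (B := [pred v | (v != fV n1) && isSq (lab v)])); last first.
  by move=> v; rewrite !inE keepE labE.
rewrite /nSq [X in _ < X](cardD1 (fV n1)) !inE la /= add1n ltnS.
apply: subset_leq_card; apply/subsetP => v; rewrite !inE.
by case/andP => -> ->.
Qed.

Lemma sys_mu G H : sys_step G H -> mu H < mu G.
Proof. by case=> [|[]]; [apply: step01|apply: step01|apply: step2]. Qed.

Lemma mu_le G : mu G <= 2 * #|gV G|.
Proof. by rewrite /mu mul2n -addnn leq_add2l max_card. Qed.

Theorem lemma4p5 :
  (~ exists Gs : nat -> graph, forall i : nat, sys_step (Gs i) (Gs i.+1)) /\
  (forall (Gs : nat -> graph) (n : nat),
      TLRG (Gs 0) ->
      (forall i : nat, i < n -> sys_step (Gs i) (Gs i.+1)) ->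
      n <= 2 * #|gV (Gs 0)|).
Proof.
split.
  case=> Gs HG.
  have key i : mu (Gs i) + i <= mu (Gs 0).
    elim: i => [|i IH]; first by rewrite addn0.
    by apply: leq_trans IH; rewrite addnS ltn_add2r; apply: sys_mu.
  by have := key (mu (Gs 0)).+1; rewrite addnS ltnNge leq_addl.
move=> Gs n _ HG.
have key i : i <= n -> mu (Gs i) + i <= mu (Gs 0).
  elim: i => [|i IH] Hi; first by rewrite addn0.
  apply: leq_trans (IH (ltnW Hi)); rewrite addnS ltn_add2r; exact: sys_mu (HG i Hi).
apply: leq_trans (mu_le _); apply: leq_trans (key n (leqnn n)); exact: leq_addl.
Qed.
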